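(* Let $n \geq 0$ be an integer and consider Nim on the hypercube $Q_{2n+1}$ in which every edge has weight $1$, with the playing piece $\Delta$ starting at the vertex $\emptyset$. Then the first player $P_1$ has a strategy which guarantees that, throughout the game, $\Delta$ only ever lies on vertices at levels $\emptyset$, $1$ and $2$, i.e. on vertices whose labelling subset $X \subseteq \{1,\dots,2n+1\}$ has $|X| \leq 2$.
   Context: Nim on a graph: two players agree on a finite simple undirected graph $G$ whose edges carry positive integer weights, and a starting vertex on which a playing piece $\Delta$ is placed. Players $P_1$ (who moves first) and $P_2$ alternate. On a turn, the player chooses an edge of positive weight incident with the vertex currently holding $\Delta$, lowers that edge's weight by a positive integer amount, and moves $\Delta$ to the other endpoint of that edge. Edges of weight $0$ are no longer playable. A player who cannot move (no playable edge is incident with $\Delta$) loses. With unit weight (every edge has weight $1$), each edge can be traversed at most once in total. The hypercube $Q_m$ has as vertices the subsets $X \subseteq \{1,\dots,m\}$ (equivalently binary $m$-tuples), two vertices being adjacent iff they differ in exactly one element; the level of vertex $X$ is $|X|$, and $\emptyset$ is the empty set. *)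

(* Defs.v *)
From mathcomp Require Import all_boot.
Set Implicit Arguments. Unset Strict Implicit. Unset Printing Implicit Defensive.

(* Vertices of Q_m: subsets of {0,..,m-1} (i.e. of {1,..,m} up to relabelling). *)
Definition vertex (m : nat) := {set 'I_m}.

Definition hadj (m : nat) (X Y : vertex m) : bool :=
  #|(X :\: Y) :|: (Y :\: X)| == 1.

Definition hedge (m : nat) (X Y : vertex m) : {set vertex m} := [set X; Y].

(* A play is recorded as the sequence t of vertices successively occupied by
   the piece after each move; the piece starts at the empty set.  With unit
   weights a move traverses an edge incident to the current vertex that has
   never been traversed before (in either direction). *)
Definition legal_play (m : nat) (t : seq (vertex m)) : bool :=
  path (@hadj m) set0 t && uniq (pairmap (@hedge m) set0 t).

Definition strategy (m : nat) := seq (vertex m) -> vertex m.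

(* P1 moves when an even number of moves has been made. The strategy must
   prescribe a legal move whenever P1 has some legal move. *)
Definition valid_strategy (m : nat) (s : strategy m) : Prop :=
  forall t : seq (vertex m), legal_play t -> ~~ odd (size t) ->
    (exists w, legal_play (rcons t w)) -> legal_play (rcons t (s t)).

Definition follows (m : nat) (s : strategy m) (t : seq (vertex m)) : Prop :=
  forall i, i < size t -> ~~ odd i -> nth set0 t i = s (take i t).

(* Main.v *)
Require Import Defs.
From mathcomp Require Import all_boot zify.
Set Implicit Arguments. Unset Strict Implicit. Unset Printing Implicit Defensive.

Lemma hadjC m (X Y : vertex m) : hadj X Y = hadj Y X.
Proof. by rewrite /hadj setUC. Qed.

Lemma hadj_irr m (X : vertex m) : hadj X X = false.
Proof. by rewrite /hadj setDv setU0 cards0. Qed.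

Lemma hadj_card m (X Y : vertex m) :
  hadj X Y -> #|X| + #|Y| = (2 * #|X :&: Y|).+1.
Proof.
move=> /eqP H.
have h0 : (X :\: Y) :&: (Y :\: X) = set0.
  by apply/setP=> x; rewrite !inE; case: (x \in X); case: (x \in Y).
move: H; rewrite cardsU h0 cards0 subn0 => H.
have h1 := cardsID Y X. have h2 := cardsID X Y. rewrite setIC in h2. lia.
Qed.

Lemma hadj_odd m (X Y : vertex m) : hadj X Y -> odd #|Y| = ~~ odd #|X|.
Proof.
move=> /hadj_card H.
have : odd (#|X| + #|Y|) by rewrite H /= mul2n odd_double.
by rewrite oddD; case: (odd #|X|); case: (odd #|Y|).
Qed.

Lemma last_odd m (x : vertex m) t : path (@hadj m) x t ->
  odd #|last x t| = odd #|x| (+) odd (size t).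
Proof.
elim: t x => [|y t IH] x /=; first by rewrite addbF.
move=> /andP[hxy hp]; rewrite IH // (hadj_odd hxy).
by case: (odd #|x|); case: (odd (size t)).
Qed.

Lemma pairmap_rcons (T U : Type) (f : T -> T -> U) x t y :
  pairmap f x (rcons t y) = rcons (pairmap f x t) (f (last x t) y).
Proof. by elim: t x => [|z t IH] x //=; rewrite IH. Qed.

Lemma count_inc m (v x : vertex m) t : path (@hadj m) x t ->
  count (fun e : {set vertex m} => v \in e) (pairmap (@hedge m) x t) + (last x t == v)
  = (x == v) + 2 * count (pred1 v) t.
Proof.
elim: t x => [|y t IH] x /=; first by rewrite addn0.
move=> /andP[hxy hp].
have nxy : x != y by apply/eqP=> E; rewrite E hadj_irr in hxy.
rewrite -addnA IH // /hedge in_set2.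
move: nxy; rewrite (eq_sym v x) (eq_sym v y).
case: (x =P v) => [->|_]; case: (y =P v) => [->|_] //=; rewrite ?eqxx //= => _; lia.
Qed.

Lemma edge_struct m (x : vertex m) t e : path (@hadj m) x t ->
  e \in pairmap (@hedge m) x t ->
  exists a b, [/\ e = hedge a b, hadj a b, a \in x :: t & b \in x :: t].
Proof.
elim: t x => [|y t IH] x //=.
move=> /andP[hxy hp]; rewrite inE => /orP[/eqP ->|].
  by exists x, y; rewrite !inE !eqxx orbT.
move=> /(IH _ hp) [a [b [-> hab ha hb]]].
by exists a, b; split=> //; rewrite inE ?ha ?hb orbT.
Qed.

Lemma hedge_inj m (v : vertex m) : injective (@hedge m v).
Proof.
move=> u u' E.
have h1 : u \in hedge v u' by rewrite -E /hedge in_set2 eqxx orbT.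
have h2 : u' \in hedge v u by rewrite E /hedge in_set2 eqxx orbT.
move: h1 h2; rewrite /hedge !in_set2.
case/orP=> /eqP h1 //; subst u; by case/orP=> /eqP ->.
Qed.

Lemma hedge_eq m (v u a b : vertex m) : hedge v u = hedge a b -> hadj a b ->
  hadj v u && ((u == a) || (u == b)).
Proof.
move=> E hab.
have hu : u \in hedge a b by rewrite -E /hedge in_set2 eqxx orbT.
have hv : v \in hedge a b by rewrite -E /hedge in_set2 eqxx.
have nab : a != b by apply/eqP=> e; rewrite e hadj_irr in hab.
move: hu hv; rewrite /hedge !in_set2.
case/orP=> /eqP eu; case/orP=> /eqP ev; rewrite {}eu {}ev in E *.
- have : b \in hedge a a by rewrite E /hedge in_set2 eqxx orbT.
  by rewrite /hedge in_set2 orbb eq_sym (negPf nab).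
- by rewrite hadjC hab eqxx.
- by rewrite hab eqxx orbT.
- have : a \in hedge b b by rewrite E /hedge in_set2 eqxx.
  by rewrite /hedge in_set2 orbb (negPf nab).
Qed.

Lemma cardU m (v x : vertex m) t : path (@hadj m) x t -> uniq (pairmap (@hedge m) x t) ->
  #|[set u | hedge v u \in pairmap (@hedge m) x t]|
  = count (fun e : {set vertex m} => v \in e) (pairmap (@hedge m) x t).
Proof.
move=> hp hE.
set E := pairmap _ x t.
have hF : uniq [seq e <- E | (fun e : {set vertex m} => v \in e) e] by apply: filter_uniq.
move/card_uniqP: hF => hF.
rewrite -size_filter -hF -(card_imset _ (@hedge_inj m v)).
apply: eq_card => e; rewrite mem_filter; apply/imsetP/andP.
- case=> u; rewrite inE => hu ->; split=> //.
  by rewrite /hedge in_set2 eqxx.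
- case=> hv he.
  have [a [b [Ee _ _ _]]] := edge_struct hp he.
  move: hv; rewrite Ee /hedge in_set2 => /orP[/eqP->|/eqP->].
  + by exists b => //; rewrite inE -/(hedge a b) -Ee.
  + exists a; last by rewrite /hedge setUC.
    by rewrite inE /hedge setUC -/(hedge a b) -Ee.
Qed.

Lemma exists_move m (t : seq (vertex m)) : odd m -> legal_play t -> ~~ odd (size t) ->
  (forall X, X \in t -> #|X| <= 2) -> exists w, legal_play (rcons t w) && (#|w| <= 1).
Proof.
move=> hm /andP[hp hE] hev hle.
set v := last set0 t.
have hvin : v \in set0 :: t by apply: mem_last.
have hle' : forall X, X \in set0 :: t -> #|X| <= 2.
  by move=> X; rewrite inE => /orP[/eqP->|/hle//]; rewrite cards0.
have hvodd : odd #|v| = false by rewrite /v (last_odd hp) cards0 /= (negPf hev).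
have hv2 := hle' v hvin.
set U := [set u | hedge v u \in pairmap (@hedge m) set0 t].
set N := [set u | hadj v u && (#|u| <= 1)].
have hUodd : odd #|U| = (v != set0).
  have := count_inc v hp; rewrite -/v eqxx -(cardU v hp hE) -/U => H.
  have : odd (#|U| + 1) = odd ((set0 == v) + 2 * count (pred1 v) t) by rewrite H.
  rewrite !oddD ?mul2n ?odd_double ?oddM eq_sym /=.
  by case: (v == set0); case: (odd #|U|); case: (odd (count_mem v t)).
have hUN : U \subset N.
  apply/subsetP => u; rewrite !inE => /(edge_struct hp) [a [b [Ee hab ha hb]]].
  have /andP[hvu hu] := hedge_eq Ee hab.
  rewrite hvu /=.
  have hu2 : #|u| <= 2 by apply: hle'; case/orP: hu => /eqP ->.
  have := hadj_odd hvu; rewrite hvodd /=.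
  move=> ho; have h1 : #|u| != 2 by apply/eqP=> e; rewrite e in ho.
  have h0: #|u| != 0 by apply/eqP=> e; rewrite e in ho.
  by move: hu2 h1 h0; case: #|u| => [|[|[|k]]].
have hNodd : odd #|N| = (v == set0).
  case: (v =P set0) => [hv0|hvn].
  - have -> : N = [set u : vertex m | #|u| == 1].
      apply/setP=> u; rewrite !inE /hadj hv0 set0D setD0 set0U.
      by case: eqP => // ->.
    by rewrite card_draws card_ord bin1 hm.
  - have hv2' : #|v| == 2.
      have hn0 : #|v| != 0 by apply/eqP=> /cards0_eq.
      move: hvodd hv2 hn0; case: (#|v|) => [|[|[|k]]] //.
    have /cards2P [a [b [nab Ev]]] := hv2'.
    have -> : N = [set [set a]; [set b]].
      apply/setP=> u; rewrite !inE; apply/idP/idP.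
      * move=> /andP[hvu hu]; have := hadj_card hvu.
        have : #|v :&: u| <= #|u| by apply: subset_leq_card; apply: subsetIr.
        move/eqP: hv2' => -> hI hc.
        have /cards1P [x ex] : #|u| == 1 by lia.
        have : 0 < #|v :&: u| by lia.
        case/card_gt0P => y; rewrite !inE ex Ev !inE => /andP[hy /eqP eyx].
        move: hy; rewrite eyx => /orP[/eqP->|/eqP->]; by rewrite eqxx ?orbT.
      * have hab : forall c d : 'I_m, c != d -> hadj [set c; d] [set c].
          move=> c d ncd; rewrite /hadj.
          rewrite (_ : ([set c; d] :\: [set c]) :|: ([set c] :\: [set c; d]) = [set d]) ?cards1 //.
          apply/setP=> z; rewrite !inE.
          case: (z =P c) => [zc|]; last by case: (z == d); rewrite ?orbF.
          by rewrite zc (negPf ncd).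
        rewrite Ev; case/orP=> /eqP ->; rewrite cards1 andbT; first exact: hab.
        by rewrite setUC; apply: hab; rewrite eq_sym.
    by rewrite cards2 (inj_eq set1_inj) nab.
have : ~~ (N \subset U).
  apply/negP=> hNU.
  have e : U = N by apply/eqP; rewrite eqEsubset hUN hNU.
  by move: hUodd hNodd; rewrite e => ->; case: (v == set0).
case/subsetPn => u; rewrite !inE => /andP[hvu hu] hnU.
exists u; rewrite hu andbT /legal_play rcons_path hp hvu pairmap_rcons rcons_uniq hE.
by rewrite -/v hnU.
Qed.

Definition strat m (t : seq (vertex m)) : vertex m :=
  if [pick w | legal_play (rcons t w) && (#|w| <= 1)] is Some w then w
  else if [pick w | legal_play (rcons t w)] is Some w then w else set0.

Lemma strat_valid m : valid_strategy (@strat m).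
Proof.
move=> t _ _ [w hw]; rewrite /strat.
case: pickP => [w' /andP[]//|_].
case: pickP => [w' //|H].
by rewrite H in hw.
Qed.

Lemma strat_small m (t : seq (vertex m)) :
  (exists w, legal_play (rcons t w) && (#|w| <= 1)) -> #|strat t| <= 1.
Proof.
case=> w hw; rewrite /strat; case: pickP => [w' /andP[]//|H].
by rewrite H in hw.
Qed.

Lemma levels m (t : seq (vertex m)) : path (@hadj m) set0 t ->
  (forall i, i < size t -> ~~ odd i -> #|nth set0 t i| <= 1) ->
  forall X, X \in t -> #|X| <= 2.
Proof.
move=> hp hi X /(nthP set0) [i hi' <-].
case: (boolP (odd i)) => oi; last by rewrite (leq_trans (hi _ hi' oi)).
case: i oi hi' => [|j] //= oj hj.
have hadjj := (pathP set0 hp) j.+1 hj.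
have hlj := hi j (ltnW hj) oj.
have := hadj_card hadjj.
have : #|nth set0 (set0 :: t) j.+1 :&: nth set0 t j.+1| <= #|nth set0 (set0 :: t) j.+1|.
  by apply: subset_leq_card; apply: subsetIl.
move: hlj => /=; lia.
Qed.

Lemma inv m : odd m -> forall t : seq (vertex m), legal_play t -> follows (@strat m) t ->
  forall i, i < size t -> ~~ odd i -> #|nth set0 t i| <= 1.
Proof.
move=> hm; elim/last_ind => [|t w IH] //.
move=> /andP[]; rewrite rcons_path pairmap_rcons rcons_uniq => /andP[hp _] /andP[_ hE] hf.
have hl : legal_play t by apply/andP.
have hft : follows (@strat m) t.
  move=> i hi oi; have h := hf i.
  rewrite size_rcons nth_rcons hi -cats1 take_cat hi in h.
  exact: h (ltnW hi) oi.
move=> i; rewrite size_rcons ltnS leq_eqVlt => /orP[/eqP ->|hi] oi; last first.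
  by rewrite nth_rcons hi; apply: IH.
rewrite nth_rcons ltnn eqxx.
have -> : w = strat t.
  have h := hf (size t).
  rewrite size_rcons nth_rcons ltnn eqxx -cats1 take_cat ltnn subnn take0 cats0 in h.
  exact: h.
apply: strat_small; apply: exists_move => //.
exact: levels hp (IH hl hft).
Qed.

Theorem mainTheorem1 (n : nat) :
  exists s : strategy (2 * n + 1),
    valid_strategy s /\
    forall t : seq (vertex (2 * n + 1)),
      legal_play t -> follows s t ->
      forall X, X \in t -> #|X| <= 2.
Proof.
have hm : odd (2 * n + 1) by rewrite addn1 /= mul2n odd_double.
exists (@strat _); split; first exact: strat_valid.
move=> t hl hf; case/andP: (hl) => hp _.
exact: levels hp (inv hm hl hf).
Qed.
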